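(* For every nonnegative integer $p$ and every $k\in\mathbb{Z}$, the generalized energy operators $[[\cdot]^p]_k^{+}$ and $[[\cdot]^p]_k^{-}$ are bilinear and satisfy the derivative chain rule property: for every $f\in\mathbf{S}^-(\mathbb{R})$, writing $g=[[f]^{p-1}]_k^{\pm}$ (with $g=f$ when $p=0$), so that $[[f]^p]_k^{\pm}=[g,g]_k^{\pm}$, $$\partial_t[g,g]_k^{\pm}=[g,g]_{k+1}^{\pm}+[\partial_t g,\partial_t g]_{k-1}^{\pm},$$ which the paper writes as $\partial_t[[f]^p]_k^{\pm}=[[f]^p]_{k+1}^{\pm}+[\partial_t[f]^p]_{k-1}^{\pm}$.
   Context: $\mathbf{S}^{-}(\mathbb{R})=\{f\in C^\infty(\mathbb{R}) : \sup_{t<0}|t|^k|\partial_t^j f(t)|<\infty \text{ for all } k,j\ge 0\}$. For $k\in\mathbb{Z}$, $\partial_t^k$ is the $k$-th derivative when $k\ge0$ and the $|k|$-fold iterated antiderivative $\int_{-\infty}^t$ when $k<0$. For $k\in\mathbb{Z}$, $[g,h]_k^{\pm}=\partial_t g\,\partial_t^{k-1}h\pm g\,\partial_t^k h$. The energy operators are $\Psi_k^{\pm}(f)=[f,f]_k^{\pm}=:[[f]^0]_k^{\pm}$, and the generalized energy operators are defined recursively by $[[f]^{p+1}]_k^{\pm}=\big[[[f]^{p}]_k^{\pm},[[f]^{p}]_k^{\pm}\big]_k^{\pm}$. Bilinearity is in the sense used by the paper: a map $B:\mathbf{V}\times\mathbf{V}\to\mathbf{S}^-(\mathbb{R})$ ($\mathbf{V}\subseteq\mathbf{S}^-(\mathbb{R})$)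 is bilinear if $B(v_1+v_2,w)=B(v_1,w)+B(v_2,w)$, $B(v,w_1+w_2)=B(v,w_1)+B(v,w_2)$ and $B(cv,w)=B(v,cw)=cB(v,w)$ for $c\in\mathbb{R}$; an operator of the form $f\mapsto B(f,f)$ built from such brackets (as $\Psi_k^{\pm}$ is from $[\cdot,\cdot]_k^{\pm}$) is called bilinear. *)

(* Defs.v *)
From Stdlib Require Import Reals ZArith.
From Coquelicot Require Import Coquelicot.
Open Scope R_scope.

Definition smooth (f : R -> R) : Prop :=
  forall (n : nat) (x : R), ex_derive (Derive_n f n) x.

Definition Sminus (f : R -> R) : Prop :=
  smooth f /\
  forall (k j : nat), exists M : R,
    forall t : R, t < 0 -> (Rabs t) ^ k * Rabs (Derive_n f j t) <= M.

Definition antider (f : R -> R) (t : R) : R :=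
  RInt_gen f (Rbar_locally m_infty) (at_point t).

Fixpoint iter_antider (n : nat) (f : R -> R) : R -> R :=
  match n with
  | O => f
  | S n' => antider (iter_antider n' f)
  end.

Definition dk (k : Z) (f : R -> R) : R -> R :=
  match k with
  | Z0 => f
  | Zpos p => Derive_n f (Pos.to_nat p)
  | Zneg p => iter_antider (Pos.to_nat p) f
  end.

Definition sgn (pm : bool) : R := if pm then 1 else -1.

Definition bracket (pm : bool) (k : Z) (g h : R -> R) : R -> R :=
  fun t => Derive g t * dk (k - 1) h t + sgn pm * (g t * dk k h t).

Fixpoint gen_energy (pm : bool) (p : nat) (k : Z) (f : R -> R) : R -> R :=
  match p with
  | O => bracket pm k f f
  | S p' => bracket pm k (gen_energy pm p' k f) (gen_energy pm p' k f)
  end.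

Definition gen_base (pm : bool) (p : nat) (k : Z) (f : R -> R) : R -> R :=
  match p with
  | O => f
  | S p' => gen_energy pm p' k f
  end.

Definition bilinear_on_Sminus (B : (R -> R) -> (R -> R) -> (R -> R)) : Prop :=
  (forall v w, Sminus v -> Sminus w -> Sminus (B v w)) /\
  (forall v1 v2 w, Sminus v1 -> Sminus v2 -> Sminus w ->
     forall t, B (fun x => v1 x + v2 x) w t = B v1 w t + B v2 w t) /\
  (forall v w1 w2, Sminus v -> Sminus w1 -> Sminus w2 ->
     forall t, B v (fun x => w1 x + w2 x) t = B v w1 t + B v w2 t) /\
  (forall (c : R) v w, Sminus v -> Sminus w ->
     forall t, B (fun x => c * v x) w t = c * B v w t /\
               B v (fun x => c * w x) t = c * B v w t).

(* Main.v *)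
Require Import Defs.
From Stdlib Require Import Reals ZArith.
From Coquelicot Require Import Coquelicot.
From Stdlib Require Import Lra Lia FunctionalExtensionality List.
Import ListNotations.
Open Scope R_scope.

Definition decay (h : R -> R) : Prop :=
  forall k : nat, exists M : R, forall t : R, t < 0 -> (Rabs t) ^ k * Rabs (h t) <= M.

Lemma pow_le_one (x : R) (k : nat) : 0 <= x <= 1 -> x ^ k <= 1.
Proof. intros H. rewrite <- (pow1 k). apply pow_incr. lra. Qed.

Lemma pow_bound (x : R) (k : nat) : 0 <= x -> (1 + x) ^ k <= 2 ^ k * (1 + x ^ k).
Proof.
  intros Hx. induction k as [|k IH]; simpl. lra.
  assert (H : x + x ^ k <= 1 + x * x ^ k).
  { destruct (Rle_dec x 1).
    - assert (x ^ k <= 1) by (apply pow_le_one; lra).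
      assert (0 <= x ^ k) by (apply pow_le; lra). nra.
    - assert (1 <= x ^ k) by (apply pow_R1_Rle; lra). nra. }
  assert (0 <= 2 ^ k) by (apply pow_le; lra).
  assert (0 <= (1+x)^k) by (apply pow_le; lra).
  nra.
Qed.

Lemma decay1 (h : R -> R) : decay h ->
  forall k, exists M, forall t, t < 0 -> (1 - t) ^ k * Rabs (h t) <= M.
Proof.
  intros Hd k. destruct (Hd k) as [Mk HMk]. destruct (Hd 0%nat) as [M0 HM0].
  exists (2 ^ k * (M0 + Mk)). intros t Ht.
  specialize (HMk t Ht). specialize (HM0 t Ht). simpl in HM0.
  assert (E : 1 - t = 1 + Rabs t) by (rewrite Rabs_left; lra).
  rewrite E.
  pose proof (pow_bound (Rabs t) k (Rabs_pos t)).
  assert (0 <= 2 ^ k) by (apply pow_le; lra).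
  pose proof (Rabs_pos (h t)).
  assert (0 <= Rabs t ^ k) by (apply pow_le; apply Rabs_pos).
  apply Rle_trans with (2 ^ k * (1 + Rabs t ^ k) * Rabs (h t)).
  - apply Rmult_le_compat_r; auto.
  - nra.
Qed.

Lemma RInt_bound (h : R -> R) (C v u : R) :
  (forall x, continuous h x) ->
  v <= u -> u < 0 ->
  (forall s, v <= s <= u -> (1 - s) ^ 2 * Rabs (h s) <= C) ->
  Rabs (RInt h v u) <= C / (1 - u).
Proof.
  intros Hc Hvu Hu Hb.
  assert (HC : 0 <= C).
  { specialize (Hb u (conj Hvu (Rle_refl u))).
    pose proof (Rabs_pos (h u)). assert (0 <= (1-u)^2) by (apply pow_le; lra). nra. }
  assert (Hint : is_RInt (fun s => C / (1 - s) ^ 2) v u (minus (C / (1 - u)) (C / (1 - v)))).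
  { apply (is_RInt_derive (fun s => C / (1 - s))).
    - intros x Hx. rewrite Rmin_left in Hx by lra. rewrite Rmax_right in Hx by lra.
      auto_derive. lra. field. lra.
    - intros x Hx. rewrite Rmin_left in Hx by lra. rewrite Rmax_right in Hx by lra.
      apply (@ex_derive_continuous R_AbsRing R_NormedModule). auto_derive. assert (1 - x <> 0) by lra.
      auto. }
  assert (Hex : ex_RInt h v u) by (apply (@ex_RInt_continuous R_CompleteNormedModule); intros; apply Hc).
  apply Rle_trans with (RInt (fun t => Rabs (h t)) v u).
  - apply abs_RInt_le; auto.
  - apply Rle_trans with (RInt (fun s => C / (1 - s) ^ 2) v u).
    + apply RInt_le; auto.
      * apply (@ex_RInt_continuous R_CompleteNormedModule). intros z Hz. apply continuous_comp; auto.
        apply continuous_Rabs.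
      * eexists; eauto.
      * intros x Hx. specialize (Hb x (conj (Rlt_le _ _ (proj1 Hx)) (Rlt_le _ _ (proj2 Hx)))).
        assert (0 < (1-x)^2) by (apply pow_lt; lra).
        apply (Rmult_le_reg_l ((1-x)^2)); auto. field_simplify; lra.
    + rewrite (is_RInt_unique _ _ _ _ Hint). unfold minus, plus, opp; simpl.
      assert (0 <= C / (1 - v)) by (apply Rdiv_le_0_compat; lra). lra.
Qed.

Lemma ball_R (x y eps : R) : ball x eps y <-> Rabs (y - x) < eps.
Proof. unfold ball; simpl; unfold AbsRing_ball, abs, minus, plus, opp; simpl. tauto. Qed.

Lemma eps_le (X B : R) : (forall eps, 0 < eps -> X <= B + eps) -> X <= B.
Proof.
  intros H. destruct (Rle_dec X B); auto.
  specialize (H ((X - B)/2)). lra.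
Qed.

Lemma antider_core (h : R -> R) :
  (forall x, continuous h x) -> decay h ->
  exists L,
    (forall t, is_RInt_gen h (Rbar_locally m_infty) (at_point t) (RInt h 0 t - L)) /\
    (forall k, exists M, forall t, t < 0 -> Rabs t ^ k * Rabs (RInt h 0 t - L) <= M).
Proof.
  intros Hc Hd.
  set (P := fun t => RInt h 0 t).
  assert (Hex : forall a b, ex_RInt h a b)
    by (intros; apply (@ex_RInt_continuous R_CompleteNormedModule); intros; apply Hc).
  assert (HP : forall v u, P u - P v = RInt h v u).
  { intros v u. unfold P.
    rewrite <- (RInt_Chasles h 0 v u) by auto. unfold plus; simpl. ring. }
  assert (derP : forall t, is_derive P t (h t)).
  { intros t. apply (is_derive_RInt h P 0 t); auto.
    apply filter_forall. intros b. apply (RInt_correct h 0 b). auto. }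
  destruct (decay1 h Hd 2) as [M2 HM2].
  assert (Hcauchy : exists L, filterlim P (Rbar_locally m_infty) (locally L)).
  { apply (@Hierarchy.filterlim_locally_cauchy R R_CompleteSpace).
    - apply Rbar_locally_filter.
    - intros eps.
      assert (HM2p : 0 <= M2).
      { specialize (HM2 (-1) ltac:(lra)). pose proof (Rabs_pos (h (-1))).
        assert (0 <= (1 - -1)^2) by (apply pow_le; lra). nra. }
      exists (fun x => x < - (M2 / eps)). split.
      + exists (- (M2 / eps)). auto.
      + assert (key : forall u v, v <= u -> u < - (M2/eps) -> Rabs (P u - P v) < eps).
        { intros u v Hvu Hu. rewrite HP.
          assert (Hpe : 0 <= M2 / eps) by (apply Rdiv_le_0_compat; auto; apply cond_pos).
          apply Rle_lt_trans with (M2 / (1 - u)).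
          - apply RInt_bound; auto. lra. intros s Hs. apply HM2. lra.
          - pose proof (cond_pos eps).
            apply (Rmult_lt_reg_r (1 - u)). lra.
            unfold Rdiv. rewrite Rmult_assoc, Rinv_l by lra.
            assert (M2 = (M2/eps) * eps) by (field; lra). nra. }
        intros u v Hu Hv. apply ball_R.
        destruct (Rle_dec v u).
        * rewrite Rabs_minus_sym. apply key; auto.
        * apply key; auto; lra. }
  destruct Hcauchy as [L HL].
  exists L. split.
  - intros t.
    apply (is_RInt_gen_ext (Derive P)).
    + apply filter_forall. intros [a b] x _. simpl. apply is_derive_unique, derP.
    + apply (is_RInt_gen_Derive P L (P t)).
      * apply filter_forall. intros. eexists; apply derP.
      * apply filter_forall. intros ab x _.
        apply (continuous_ext h). intros; symmetry; apply is_derive_unique, derP.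
        apply Hc.
      * exact HL.
      * intros Q HQ. apply locally_singleton in HQ. exact HQ.
  - intros k. destruct (decay1 h Hd (k + 2)) as [M HM].
    exists M. intros t Ht.
    assert (Hb : forall a, a <= t -> Rabs (P t - P a) <= M / (1 - t) ^ k).
    { intros a Ha. rewrite HP.
      apply Rle_trans with ((M / (1 - t) ^ k) / (1 - t)).
      - apply RInt_bound; auto. intros s Hs.
        specialize (HM s ltac:(lra)). rewrite pow_add in HM.
        assert (0 < (1-t)^k) by (apply pow_lt; lra).
        assert ((1-t)^k <= (1-s)^k) by (apply pow_incr; lra).
        pose proof (Rabs_pos (h s)).
        assert (0 <= (1-s)^2) by (apply pow_le; lra).
        apply (Rmult_le_reg_l ((1-t)^k)); auto.
        apply Rle_trans with ((1-s)^(k)*((1-s)^2*Rabs (h s))). apply Rmult_le_compat_r; nra.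
        replace ((1 - t) ^ k * (M / (1 - t) ^ k)) with M by (field; lra). nra.
      - assert (0 < (1-t)^k) by (apply pow_lt; lra).
        assert (0 <= M).
        { specialize (HM t Ht). pose proof (Rabs_pos (h t)).
          assert (0 <= (1-t)^(k+2)) by (apply pow_le; lra). nra. }
        assert (0 <= M / (1-t)^k) by (apply Rdiv_le_0_compat; auto).
        unfold Rdiv at 1. rewrite <- (Rmult_1_r (M / (1-t)^k)) at 2.
        apply Rmult_le_compat_l; auto. rewrite <- Rinv_1. apply Rinv_le_contravar; lra. }
    assert (Hlim : Rabs (P t - L) <= M / (1 - t) ^ k).
    { apply eps_le. intros eps Heps.
      pose proof (proj1 (filterlim_locally P L) HL (mkposreal eps Heps)) as HN.
      destruct HN as [N HN].
      set (a := Rmin t N - 1).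
      assert (Ha1 : a <= t) by (unfold a; pose proof (Rmin_l t N); lra).
      assert (Ha2 : a < N) by (unfold a; pose proof (Rmin_r t N); lra).
      specialize (HN a Ha2). apply ball_R in HN. simpl in HN.
      specialize (Hb a Ha1).
      replace (P t - L) with ((P t - P a) + (P a - L)) by ring.
      eapply Rle_trans. apply Rabs_triang. unfold P in *. assert (HN2 : Rabs (RInt h 0 a - L) < eps) by (apply ball_R; exact HN). lra. }
    fold (P t).
    assert (0 < (1-t)^k) by (apply pow_lt; lra).
    assert (Rabs t ^ k <= (1 - t) ^ k) by (apply pow_incr; split; [apply Rabs_pos| rewrite Rabs_left; lra]).
    assert (0 <= Rabs t ^ k) by (apply pow_le, Rabs_pos).
    apply Rle_trans with ((1-t)^k * (M / (1-t)^k)).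
    + apply Rmult_le_compat; auto. apply Rabs_pos.
    + right. field. lra.
Qed.

Lemma Dn_S (f : R -> R) (n : nat) : Derive_n f (S n) = Derive_n (Derive f) n.
Proof.
  revert f. induction n as [|n IH]; intros f. reflexivity.
  apply functional_extensionality. intros x.
  change (Derive (Derive_n f (S n)) x = Derive (Derive_n (Derive f) n) x).
  rewrite IH. reflexivity.
Qed.

Lemma Sminus_basic (f : R -> R) : Sminus f -> (forall x, ex_derive f x) /\ decay f.
Proof.
  intros [Hs Hd]. split. intros x. apply (Hs 0%nat x).
  intros k. destruct (Hd k 0%nat) as [M HM]. exists M. exact HM.
Qed.

Lemma Sminus_derive (f : R -> R) : Sminus f -> Sminus (Derive f).
Proof.
  intros [Hs Hd]. split.
  - intros n x. rewrite <- Dn_S. apply Hs.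
  - intros k j. destruct (Hd k (S j)) as [M HM]. exists M. rewrite <- Dn_S. exact HM.
Qed.

Lemma Sminus_intro (f : R -> R) :
  (forall x, ex_derive f x) -> decay f -> Sminus (Derive f) -> Sminus f.
Proof.
  intros He Hd [Hs Hd']. split.
  - intros [|n] x. exact (He x). rewrite Dn_S. apply Hs.
  - intros k [|j]. destruct (Hd k) as [M HM]. exists M. exact HM.
    rewrite Dn_S. apply Hd'.
Qed.

Lemma Sminus_class (P : (R -> R) -> Prop) :
  (forall F, P F -> (forall x, ex_derive F x) /\ decay F /\ P (Derive F)) ->
  forall F, P F -> Sminus F.
Proof.
  intros HP.
  assert (H : forall n F, P F -> (forall x, ex_derive (Derive_n F n) x) /\ decay (Derive_n F n)).
  { induction n as [|n IH]; intros F HF.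
    - destruct (HP F HF) as [H1 [H2 _]]. split; auto.
    - rewrite Dn_S. apply IH. apply (HP F HF). }
  intros F HF. split.
  - intros n x. apply (H n F HF).
  - intros k j. apply (H j F HF).
Qed.

Definition term := (R * (R -> R) * (R -> R))%type.
Fixpoint sp (l : list term) (x : R) : R :=
  match l with
  | nil => 0
  | (c, f, g) :: l' => c * f x * g x + sp l' x
  end.
Fixpoint dl (l : list term) : list term :=
  match l with
  | nil => nil
  | (c, f, g) :: l' => (c, Derive f, g) :: (c, f, Derive g) :: dl l'
  end.
Fixpoint okl (l : list term) : Prop :=
  match l with
  | nil => True
  | (c, f, g) :: l' => Sminus f /\ Sminus g /\ okl l'
  end.

Lemma okl_dl l : okl l -> okl (dl l).
Proof.
  induction l as [|[[c f] g] l IH]; simpl; auto.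
  intros [Hf [Hg Hl]]. refine (conj (Sminus_derive f Hf) (conj Hg (conj Hf (conj (Sminus_derive g Hg) (IH Hl))))).
Qed.

Lemma sp_derive l : okl l -> forall x, is_derive (sp l) x (sp (dl l) x).
Proof.
  induction l as [|[[c f] g] l IH]; simpl; intros Hl x.
  - apply (is_derive_const 0).
  - destruct Hl as [Hf [Hg Hl]].
    destruct (Sminus_basic f Hf) as [Hf1 _]. destruct (Sminus_basic g Hg) as [Hg1 _].
    assert (H1 : is_derive (fun y => c * f y * g y) x (c * Derive f x * g x + c * f x * Derive g x)).
    { eapply is_derive_ext. intros t. symmetry. apply Rmult_assoc.
      replace (c * Derive f x * g x + c * f x * Derive g x) with
        (c * (Derive f x * g x + f x * Derive g x)) by ring.
      apply (is_derive_scal (fun y => f y * g y)).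
      apply (is_derive_mult f g). apply Derive_correct, Hf1. apply Derive_correct, Hg1.
      intros; apply Rmult_comm. }
    replace (c * Derive f x * g x + (c * f x * Derive g x + sp (dl l) x))
      with ((c * Derive f x * g x + c * f x * Derive g x) + sp (dl l) x) by ring.
    apply (is_derive_plus (fun y => c * f y * g y) (sp l)); auto.
Qed.

Lemma decay_plus f g : decay f -> decay g -> decay (fun x => f x + g x).
Proof.
  intros Hf Hg k. destruct (Hf k) as [M1 H1]. destruct (Hg k) as [M2 H2].
  exists (M1 + M2). intros t Ht. specialize (H1 t Ht). specialize (H2 t Ht).
  pose proof (Rabs_triang (f t) (g t)).
  assert (0 <= Rabs t ^ k) by (apply pow_le, Rabs_pos). nra.
Qed.

Lemma decay_prod c f g : decay f -> decay g -> decay (fun x => c * f x * g x).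
Proof.
  intros Hf Hg k. destruct (Hf k) as [M1 H1]. destruct (Hg 0%nat) as [M2 H2].
  exists (Rabs c * M1 * M2). intros t Ht. specialize (H1 t Ht). specialize (H2 t Ht).
  simpl in H2. rewrite Rmult_1_l in H2.
  rewrite !Rabs_mult.
  assert (0 <= Rabs t ^ k) by (apply pow_le, Rabs_pos).
  pose proof (Rabs_pos c). pose proof (Rabs_pos (f t)). pose proof (Rabs_pos (g t)).
  assert (0 <= Rabs t ^ k * Rabs (f t)) by nra.
  assert (0 <= M1) by lra.
  replace (Rabs t ^ k * (Rabs c * Rabs (f t) * Rabs (g t))) with
    (Rabs c * (Rabs t ^ k * Rabs (f t)) * Rabs (g t)) by ring.
  apply Rmult_le_compat; auto. nra. apply Rmult_le_compat_l; auto.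
Qed.

Lemma sp_decay l : okl l -> decay (sp l).
Proof.
  induction l as [|[[c f] g] l IH]; simpl; intros Hl.
  - intros k. exists 0. intros. rewrite Rabs_R0. lra.
  - destruct Hl as [Hf [Hg Hl]].
    apply (decay_plus (fun x => c * f x * g x)); auto.
    apply decay_prod. apply Sminus_basic, Hf. apply Sminus_basic, Hg.
Qed.

Lemma Sminus_sp l : okl l -> Sminus (sp l).
Proof.
  intros Hl. apply (Sminus_class (fun F => exists l, okl l /\ F = sp l)).
  - intros F [l' [Hl' ->]]. split; [|split].
    + intros x. eexists. apply sp_derive; auto.
    + apply sp_decay; auto.
    + exists (dl l'). split. apply okl_dl; auto.
      apply functional_extensionality. intros x. apply is_derive_unique, sp_derive; auto.
  - exists l; auto.
Qed.

Lemma Sminus_Dn f n : Sminus f -> Sminus (Derive_n f n).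
Proof.
  intros Hf. induction n as [|n IH]. exact Hf.
  change (Sminus (Derive (Derive_n f n))). apply Sminus_derive; auto.
Qed.

Lemma Sminus_cont f : Sminus f -> forall x, continuous f x.
Proof.
  intros Hf x. apply (@ex_derive_continuous R_AbsRing R_NormedModule).
  apply Sminus_basic; auto.
Qed.

Lemma antider_spec h : Sminus h ->
  (forall t, is_RInt_gen h (Rbar_locally m_infty) (at_point t) (antider h t)) /\
  (forall t, is_derive (antider h) t (h t)) /\ decay (antider h).
Proof.
  intros Hh. destruct (Sminus_basic h Hh) as [_ Hd].
  destruct (antider_core h (Sminus_cont h Hh) Hd) as [L [H1 H2]].
  assert (E : antider h = fun t => RInt h 0 t - L).
  { apply functional_extensionality. intros t. unfold antider.
    apply (is_RInt_gen_unique h). apply H1. }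
  rewrite E. split; [|split]; auto.
  intros t.
  replace (h t) with (h t - 0) by ring.
  apply (is_derive_minus (fun t => RInt h 0 t) (fun _ => L)).
  - apply (is_derive_RInt h _ 0 t).
    apply filter_forall. intros b. apply (RInt_correct h 0 b).
    apply (@ex_RInt_continuous R_CompleteNormedModule); intros; apply Sminus_cont; auto.
    apply Sminus_cont; auto.
  - apply (@is_derive_const R_AbsRing).
Qed.

Lemma Sminus_antider h : Sminus h -> Sminus (antider h).
Proof.
  intros Hh. destruct (antider_spec h Hh) as [_ [H2 H3]].
  apply Sminus_intro; auto.
  - intros x. eexists; apply H2.
  - replace (Derive (antider h)) with h; auto.
    apply functional_extensionality. intros x. symmetry. apply is_derive_unique, H2.
Qed.

Lemma Sminus_iter h n : Sminus h -> Sminus (iter_antider n h).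
Proof. intros Hh. induction n as [|n IH]; simpl; auto. apply Sminus_antider; auto. Qed.

Lemma Sminus_dk h k : Sminus h -> Sminus (dk k h).
Proof. intros Hh. destruct k; simpl; auto using Sminus_Dn, Sminus_iter. Qed.

Lemma antider_Derive g : Sminus g -> forall t, antider (Derive g) t = g t.
Proof.
  intros Hg t. unfold antider.
  apply (is_RInt_gen_unique (Derive g)).
  replace (g t) with (g t - 0) by ring.
  apply (is_RInt_gen_Derive g 0 (g t)).
  - apply filter_forall. intros. apply Sminus_basic; auto.
  - apply filter_forall. intros. apply Sminus_cont. apply Sminus_derive; auto.
  - destruct (Sminus_basic g Hg) as [_ Hd]. destruct (Hd 1%nat) as [M HM].
    apply filterlim_locally. intros eps.
    assert (HM0 : 0 <= M).
    { specialize (HM (-1) ltac:(lra)). simpl in HM.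
      pose proof (Rabs_pos (g (-1))). rewrite Rabs_left in HM by lra. nra. }
    exists (- (M / eps) - 1). intros x Hx. apply ball_R.
    pose proof (cond_pos eps).
    assert (Hpe : 0 <= M / eps) by (apply Rdiv_le_0_compat; lra).
    specialize (HM x ltac:(lra)). simpl in HM. rewrite Rmult_1_r in HM.
    rewrite Rabs_left in HM by lra. rewrite Rminus_0_r.
    apply (Rmult_lt_reg_l (-x)). lra.
    assert (M = (M/eps) * eps) by (field; lra). nra.
  - intros Q HQ. apply locally_singleton in HQ. exact HQ.
Qed.

Lemma dk_nat g n : dk (Z.of_nat n) g = Derive_n g n.
Proof. destruct n. reflexivity. simpl. rewrite SuccNat2Pos.id_succ. reflexivity. Qed.

Lemma dk_neg g n : dk (- Z.of_nat n) g = iter_antider n g.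
Proof. destruct n. reflexivity. simpl. rewrite SuccNat2Pos.id_succ. reflexivity. Qed.

Lemma Zcase k : (exists n, k = Z.of_nat n) \/ (exists n, k = (- Z.of_nat (S n))%Z).
Proof.
  destruct (Z_le_gt_dec 0 k).
  - left. exists (Z.to_nat k). rewrite Z2Nat.id; lia.
  - right. exists (Z.to_nat (- k - 1)). rewrite Nat2Z.inj_succ, Z2Nat.id; lia.
Qed.

Lemma iter_antider_Derive g n : Sminus g -> iter_antider (S n) (Derive g) = iter_antider n g.
Proof.
  intros Hg. induction n as [|n IH].
  - apply functional_extensionality. intros t. apply antider_Derive; auto.
  - change (antider (iter_antider (S n) (Derive g)) = antider (iter_antider n g)).
    rewrite IH. reflexivity.
Qed.

Lemma dk_deriv g : Sminus g -> forall j t, is_derive (dk j g) t (dk (j + 1) g t).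
Proof.
  intros Hg j t. destruct (Zcase j) as [[n ->]|[n ->]].
  - replace (Z.of_nat n + 1)%Z with (Z.of_nat (S n)) by lia.
    rewrite !dk_nat. apply Derive_correct. apply (proj1 Hg).
  - replace (- Z.of_nat (S n) + 1)%Z with (- Z.of_nat n)%Z by lia.
    rewrite !dk_neg. simpl. apply antider_spec. apply Sminus_iter; auto.
Qed.

Lemma dk_Dshift g : Sminus g -> forall j, dk j (Derive g) = dk (j + 1) g.
Proof.
  intros Hg j. destruct (Zcase j) as [[n ->]|[n ->]].
  - replace (Z.of_nat n + 1)%Z with (Z.of_nat (S n)) by lia.
    rewrite !dk_nat. symmetry. apply Dn_S.
  - replace (- Z.of_nat (S n) + 1)%Z with (- Z.of_nat n)%Z by lia.
    rewrite !dk_neg. apply iter_antider_Derive; auto.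
Qed.

Lemma antider_plus f g : Sminus f -> Sminus g ->
  antider (fun x => f x + g x) = fun x => antider f x + antider g x.
Proof.
  intros Hf Hg. apply functional_extensionality. intros t. unfold antider at 1.
  apply (is_RInt_gen_unique (fun x => f x + g x)).
  apply (is_RInt_gen_plus f g); apply antider_spec; auto.
Qed.

Lemma antider_scal c f : Sminus f ->
  antider (fun x => c * f x) = fun x => c * antider f x.
Proof.
  intros Hf. apply functional_extensionality. intros t. unfold antider at 1.
  apply (is_RInt_gen_unique (fun x => c * f x)).
  apply (is_RInt_gen_scal f c); apply antider_spec; auto.
Qed.



Lemma Dn_plus f g n : Sminus f -> Sminus g ->
  Derive_n (fun x => f x + g x) n = fun x => Derive_n f n x + Derive_n g n x.
Proof.
  intros Hf Hg. induction n as [|n IH]. reflexivity.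
  apply functional_extensionality. intros x.
  change (Derive (Derive_n (fun x => f x + g x) n) x = Derive (Derive_n f n) x + Derive (Derive_n g n) x).
  rewrite IH. apply Derive_plus; apply (proj1 (Sminus_Dn _ n Hf) 0%nat) || apply (proj1 (Sminus_Dn _ n Hg) 0%nat).
Qed.

Lemma Dn_scal c f n : Derive_n (fun x => c * f x) n = fun x => c * Derive_n f n x.
Proof. apply functional_extensionality. intros x. apply Derive_n_scal_l. Qed.

Lemma iter_plus f g n : Sminus f -> Sminus g ->
  iter_antider n (fun x => f x + g x) = fun x => iter_antider n f x + iter_antider n g x.
Proof.
  intros Hf Hg. induction n as [|n IH]. reflexivity.
  simpl. rewrite IH. apply antider_plus; apply Sminus_iter; auto.
Qed.

Lemma iter_scal c f n : Sminus f ->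
  iter_antider n (fun x => c * f x) = fun x => c * iter_antider n f x.
Proof.
  intros Hf. induction n as [|n IH]. reflexivity.
  simpl. rewrite IH. apply antider_scal; apply Sminus_iter; auto.
Qed.

Lemma dk_plus f g j : Sminus f -> Sminus g ->
  dk j (fun x => f x + g x) = fun x => dk j f x + dk j g x.
Proof.
  intros Hf Hg. destruct j; simpl. reflexivity. apply Dn_plus; auto. apply iter_plus; auto.
Qed.

Lemma dk_scal c f j : Sminus f -> dk j (fun x => c * f x) = fun x => c * dk j f x.
Proof.
  intros Hf. destruct j; simpl. reflexivity. apply Dn_scal. apply iter_scal; auto.
Qed.

Lemma Sminus_bracket pm k v w : Sminus v -> Sminus w -> Sminus (bracket pm k v w).
Proof.
  intros Hv Hw.
  replace (bracket pm k v w) with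
    (sp [(1, Derive v, dk (k - 1) w); (sgn pm, v, dk k w)]).
  - apply Sminus_sp. simpl.
    refine (conj (Sminus_derive v Hv) (conj (Sminus_dk w _ Hw) (conj Hv (conj (Sminus_dk w _ Hw) I)))).
  - apply functional_extensionality. intros x. unfold bracket. simpl. ring.
Qed.

Theorem proposition3 :
  forall (pm : bool) (p : nat) (k : Z),
    bilinear_on_Sminus (bracket pm k) /\
    (forall f, Sminus f ->
       Sminus (gen_energy pm p k f) /\
       (forall t, gen_energy pm p k f t =
                  bracket pm k (gen_base pm p k f) (gen_base pm p k f) t)) /\
    (forall f, Sminus f ->
       let g := gen_base pm p k f in
       forall t,
         ex_derive (bracket pm k g g) t /\
         Derive (bracket pm k g g) t =
           bracket pm (k + 1) g g t + bracket pm (k - 1) (Derive g) (Derive g) t).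
Proof.
  intros pm p k.
  assert (Hen : forall f, Sminus f -> forall p, Sminus (gen_energy pm p k f)).
  { intros f Hf p'. induction p' as [|p' IH]; simpl; apply Sminus_bracket; auto. }
  assert (Hbase : forall f, Sminus f -> Sminus (gen_base pm p k f)).
  { intros f Hf. destruct p; simpl; auto. }
  split; [|split].
  - split; [|split; [|split]].
    + intros v w Hv Hw. apply Sminus_bracket; auto.
    + intros v1 v2 w H1 H2 Hw t. unfold bracket.
      rewrite Derive_plus by (apply Sminus_basic; auto). ring.
    + intros v w1 w2 Hv H1 H2 t. unfold bracket.
      rewrite !dk_plus by auto. ring.
    + intros c v w Hv Hw t. unfold bracket. split.
      * rewrite Derive_scal. ring.
      * rewrite !dk_scal by auto. ring.
  - intros f Hf. split. apply Hen; auto.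
    intros t. destruct p; reflexivity.
  - intros f Hf g t. assert (Hg : Sminus g) by (apply Hbase; auto).
    clearbody g.
    assert (Hg1 : Sminus (Derive g)) by (apply Sminus_derive; auto).
    assert (HD : is_derive (bracket pm k g g) t
      (Derive (Derive g) t * dk (k - 1) g t + Derive g t * dk k g t
       + sgn pm * (Derive g t * dk k g t + g t * dk (k + 1) g t))).
    { unfold bracket.
      apply (is_derive_plus (fun t => Derive g t * dk (k - 1) g t)
                            (fun t => sgn pm * (g t * dk k g t))).
      - apply (is_derive_mult (Derive g) (dk (k - 1) g)).
        + apply Derive_correct. apply Sminus_basic; auto.
        + replace k with ((k - 1) + 1)%Z at 2 by ring. apply dk_deriv; auto.
        + intros; apply Rmult_comm.
      - apply (is_derive_scal (fun t => g t * dk k g t)).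
        apply (is_derive_mult g (dk k g)).
        + apply Derive_correct. apply Sminus_basic; auto.
        + apply dk_deriv; auto.
        + intros; apply Rmult_comm. }
    split. eexists; exact HD.
    rewrite (is_derive_unique _ _ _ HD).
    unfold bracket.
    rewrite !dk_Dshift by auto.
    replace (k - 1 - 1 + 1)%Z with (k - 1)%Z by ring.
    replace (k - 1 + 1)%Z with k by ring.
    replace (k + 1 - 1)%Z with k by ring.
    ring.
Qed.
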